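(* Assume $0<p<1$, $0<q<1$, $0<r<1$ and let $x_{w_1,w_2}$ ($w_1,w_2\ge0$, $w_1+w_2\ge1$) be the positive numbers defined in the context. (a) For every fixed $w_1\ge 0$, as $w_2\to\infty$, $$x_{w_1,w_2}\sim C(w_1)\,w_2^{-\left(1+\frac{\beta_1+1}{\alpha_2}\right)},\qquad C(w_1)=\frac{r}{\alpha_2}\,\frac{1}{w_1!}\,\frac{\Gamma\!\left(w_1+\frac{\beta_1}{\alpha_1}\right)}{\Gamma\!\left(\frac{\beta_1}{\alpha_1}\right)}\,\frac{\Gamma\!\left(1+\frac{\beta+1}{\alpha_2}\right)}{\Gamma\!\left(1+\frac{\beta_2}{\alpha_2}\right)}.$$ (b) Symmetrically, for every fixed $w_2\ge0$, as $w_1\to\infty$, $$x_{w_1,w_2}\sim C'(w_2)\,w_1^{-\left(1+\frac{\beta_2+1}{\alpha_1}\right)},\qquad C'(w_2)=\frac{1-r}{\alpha_1}\,\frac{1}{w_2!}\,\frac{\Gamma\!\left(w_2+\frac{\beta_2}{\alpha_2}\right)}{\Gamma\!\left(\frac{\beta_2}{\alpha_2}\right)}\,\frac{\Gamma\!\left(1+\frac{\beta+1}{\alpha_1}\right)}{\Gamma\!\left(1+\frac{\beta_1}{\alpha_1}\right)}.$$ Here $a_k\sim b_k$ means $a_k/b_k\to1$ and $\Gamma$ is the Gamma function.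
   Context: Fix an integer $N\ge 3$ and $0<p<1$, $0<q<1$, $0<r<1$. Parameters: $\alpha_1=pr+(1-p)q$, $\alpha_2=pr\frac{N-2}{N-1}+(1-p)q$, $\beta_1=\frac{(1-p)(1-q)}{p}$, $\beta_2=(N-1)\left[(1-r)+\frac{(1-p)(1-q)}{p}\right]$, $\beta=\beta_1+\beta_2$. The numbers $x_{w_1,w_2}$ (integers $w_1,w_2\ge0$, $w_1+w_2\ge1$) are defined by $x_{1,0}=\frac{1-r}{\alpha_1+\beta+1}$, $x_{0,1}=\frac{r}{\alpha_2+\beta+1}$, and for $w_1+w_2>1$ $x_{w_1,w_2}=\frac{(\alpha_1(w_1-1)+\beta_1)x_{w_1-1,w_2}+(\alpha_2(w_2-1)+\beta_2)x_{w_1,w_2-1}}{\alpha_1w_1+\alpha_2w_2+\beta+1}$, with the convention $x_{w_1,w_2}=0$ if $w_1<0$ or $w_2<0$. (In the paper $x_{w_1,w_2}$ is the almost sure limiting proportion of vertices with central weight $w_1$ and peripheral weight $w_2$ in a star-interaction random graph process.) *)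

(* Defs.v *)
From Stdlib Require Import Reals Lra ClassicalEpsilon Factorial.
Open Scope R_scope.

(** Euler's Gamma function, via the Gauss limit formula
    Gamma(x) = lim_{n->oo} n! n^x / (x (x+1) ... (x+n))   (valid for x > 0). *)
Fixpoint rising_prod (x : R) (n : nat) : R :=
  match n with
  | O => x
  | S m => rising_prod x m * (x + INR (S m))
  end.

Definition gauss_seq (x : R) (n : nat) : R :=
  INR (fact n) * Rpower (INR n) x / rising_prod x n.

Definition Gamma (x : R) : R :=
  epsilon (inhabits 0) (fun g => Un_cv (gauss_seq x) g).

Definition alpha1 (p q r : R) : R := p * r + (1 - p) * q.
Definition alpha2 (N : nat) (p q r : R) : R :=
  p * r * (INR N - 2) / (INR N - 1) + (1 - p) * q.
Definition beta1 (p q : R) : R := (1 - p) * (1 - q) / p.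
Definition beta2 (N : nat) (p q r : R) : R :=
  (INR N - 1) * ((1 - r) + (1 - p) * (1 - q) / p).
Definition beta (N : nat) (p q r : R) : R := beta1 p q + beta2 N p q r.

(** The numbers x_{w1,w2}; the value at (0,0) is an unused dummy 0. *)
Fixpoint xw (N : nat) (p q r : R) (w1 : nat) (w2 : nat) : R :=
  let a1 := alpha1 p q r in
  let a2 := alpha2 N p q r in
  let b1 := beta1 p q in
  let b2 := beta2 N p q r in
  let b := beta N p q r in
  match w1 with
  | O =>
    (fix col (w2 : nat) : R :=
       match w2 with
       | O => 0
       | S O => r / (a2 + b + 1)
       | S ((S _) as m) =>
           (a2 * INR m + b2) * col m / (a2 * INR (S m) + b + 1)
       end) w2
  | S w1' =>
    (fix col (w2 : nat) : R :=
       match w2 with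
       | O =>
           match w1' with
           | O => (1 - r) / (a1 + b + 1)
           | S _ => (a1 * INR w1' + b1) * xw N p q r w1' O
                      / (a1 * INR (S w1') + b + 1)
           end
       | S m =>
           ((a1 * INR w1' + b1) * xw N p q r w1' (S m)
            + (a2 * INR m + b2) * col m)
           / (a1 * INR (S w1') + a2 * INR (S m) + b + 1)
       end) w2
  end.

Definition Cconst (N : nat) (p q r : R) (w1 : nat) : R :=
  let a1 := alpha1 p q r in
  let a2 := alpha2 N p q r in
  r / a2 * (1 / INR (fact w1))
    * (Gamma (INR w1 + beta1 p q / a1) / Gamma (beta1 p q / a1))
    * (Gamma (1 + (beta N p q r + 1) / a2) / Gamma (1 + beta2 N p q r / a2)).

Definition Cconst' (N : nat) (p q r : R) (w2 : nat) : R :=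
  let a1 := alpha1 p q r in
  let a2 := alpha2 N p q r in
  (1 - r) / a1 * (1 / INR (fact w2))
    * (Gamma (INR w2 + beta2 N p q r / a2) / Gamma (beta2 N p q r / a2))
    * (Gamma (1 + (beta N p q r + 1) / a1) / Gamma (1 + beta1 p q / a1)).

(* Main.v *)
Require Import Defs.
From Stdlib Require Import Reals Lra Lia ZArith ClassicalEpsilon Factorial.
From Coquelicot Require Import Coquelicot.
Open Scope R_scope.

Lemma ln_le_m1 y : 0 < y -> ln y <= y - 1.
Proof. intros H. pose proof (exp_ineq1_le (ln y)). rewrite exp_ln in H0; lra. Qed.

Definition dl (n : nat) := ln (INR (S n)) - ln (INR n).

Lemma dl_bounds n : (1 <= n)%nat -> / INR (S n) <= dl n <= / INR n.
Proof.
  intros Hn. assert (H0 : 0 < INR n) by (apply lt_0_INR; lia).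
  assert (H1 : 0 < INR (S n)) by (apply lt_0_INR; lia).
  rewrite S_INR in *. unfold dl. rewrite S_INR. split.
  - pose proof (ln_le_m1 (INR n / (INR n + 1))).
    rewrite ln_div in H by lra.
    assert (INR n / (INR n + 1) - 1 = - / (INR n + 1)) by (field; lra).
    assert (0 < INR n / (INR n + 1)) by (apply Rdiv_lt_0_compat; lra). lra.
  - pose proof (ln_le_m1 ((INR n + 1)/INR n)).
    rewrite ln_div in H by lra.
    assert ((INR n + 1) / INR n - 1 = / INR n) by (field; lra).
    assert (0 < (INR n + 1) / INR n) by (apply Rdiv_lt_0_compat; lra). lra.
Qed.

Lemma lim_inv_n : is_lim_seq (fun n => / INR n) 0.
Proof.
  replace (Finite 0) with (Rbar_inv p_infty) by reflexivity.
  apply is_lim_seq_inv. apply is_lim_seq_INR. discriminate.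
Qed.

Lemma lim_inv_Sn : is_lim_seq (fun n => / INR (S n)) 0.
Proof. apply (is_lim_seq_incr_1 (fun n => / INR n)). apply lim_inv_n. Qed.

Lemma dl_lim : is_lim_seq dl 0.
Proof.
  apply is_lim_seq_le_le_loc with (u := fun _ => 0) (w := fun n => / INR n).
  - exists 1%nat. intros n Hn. pose proof (dl_bounds n Hn).
    assert (0 < / INR (S n)) by (apply Rinv_0_lt_compat, lt_0_INR; lia). lra.
  - apply is_lim_seq_const.
  - apply lim_inv_n.
Qed.

Lemma exp_cont x : continuity_pt exp x.
Proof. apply derivable_continuous_pt, derivable_pt_exp. Qed.

Lemma exp_dl_lim e : is_lim_seq (fun n => exp (e * dl n)) 1.
Proof.
  rewrite <- exp_0.
  apply is_lim_seq_continuous. apply exp_cont.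
  pose proof (is_lim_seq_scal_l dl e 0 dl_lim) as H. simpl in H. rewrite Rmult_0_r in H. exact H.
Qed.

Lemma exp_m1_le u : exp u - 1 <= u * exp u.
Proof.
  pose proof (exp_ineq1_le (-u)). rewrite exp_Ropp in H.
  pose proof (exp_pos u).
  assert (1 - u <= / exp u) by lra.
  apply Rmult_le_compat_r with (r := exp u) in H1; [|lra].
  rewrite Rinv_l in H1 by lra. nra.
Qed.

Lemma n_Sn_lim : is_lim_seq (fun n => INR n / INR (S n)) 1.
Proof.
  apply is_lim_seq_ext with (u := fun n => 1 - / INR (S n)).
  - intros n. rewrite S_INR. field. pose proof (pos_INR n). lra.
  - replace (Finite 1) with (Finite (1 - 0)) by (f_equal; ring).
    apply is_lim_seq_minus'. apply is_lim_seq_const. apply lim_inv_Sn.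
Qed.

Lemma mdl_lim e : 0 < e -> is_lim_seq (fun n => INR n * (exp (e * dl n) - 1)) e.
Proof.
  intros He.
  apply is_lim_seq_le_le_loc with (u := fun n => e * (INR n / INR (S n)))
                                   (w := fun n => e * exp (e * dl n)).
  - exists 1%nat. intros n Hn. pose proof (dl_bounds n Hn) as [Hl Hu].
    assert (H0 : 0 < INR n) by (apply lt_0_INR; lia).
    assert (H1 : 0 < INR (S n)) by (apply lt_0_INR; lia).
    split.
    + pose proof (exp_ineq1_le (e * dl n)).
      assert (e * / INR (S n) <= e * dl n) by (apply Rmult_le_compat_l; lra).
      assert (INR n * (e */ INR (S n)) <= INR n * (exp (e * dl n) - 1))
        by (apply Rmult_le_compat_l; lra).
      replace (e * (INR n / INR (S n))) with (INR n * (e * / INR (S n))) by (unfold Rdiv; ring).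
      lra.
    + pose proof (exp_m1_le (e * dl n)). pose proof (exp_pos (e * dl n)).
      assert (INR n * dl n <= 1).
      { apply Rmult_le_reg_r with (/ INR n). apply Rinv_0_lt_compat; lra.
        replace (INR n * dl n * / INR n) with (dl n) by (field; lra). lra. }
      assert (INR n * (exp (e * dl n) - 1) <= INR n * (e * dl n * exp (e * dl n)))
        by (apply Rmult_le_compat_l; lra).
      assert (INR n * (e * dl n * exp (e * dl n)) = e * exp (e * dl n) * (INR n * dl n)) by ring.
      assert (e * exp (e * dl n) * (INR n * dl n) <= e * exp (e * dl n) * 1).
      { apply Rmult_le_compat_l. apply Rmult_le_pos; lra. lra. }
      lra.
  - replace (Finite e) with (Rbar_mult e 1) by (simpl; f_equal; ring).
    apply is_lim_seq_scal_l. apply n_Sn_lim.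
  - replace (Finite e) with (Rbar_mult e 1) by (simpl; f_equal; ring).
    apply is_lim_seq_scal_l. apply exp_dl_lim.
Qed.

Lemma rising_pos x n : 0 < x -> 0 < rising_prod x n.
Proof.
  intros Hx. induction n; cbn [rising_prod]; [lra|].
  apply Rmult_lt_0_compat; auto. pose proof (pos_INR n). rewrite S_INR. lra.
Qed.

Lemma fact_pos n : 0 < INR (fact n).
Proof. apply lt_0_INR, lt_O_fact. Qed.

Lemma gauss_pos x n : 0 < x -> 0 < gauss_seq x n.
Proof.
  intros Hx. unfold gauss_seq, Rpower. apply Rdiv_lt_0_compat.
  apply Rmult_lt_0_compat. apply fact_pos. apply exp_pos. apply rising_pos; auto.
Qed.

Lemma gauss_S x n : 0 < x ->
  gauss_seq x (S n) = gauss_seq x n * INR (S n) * exp (x * dl n) / (x + INR (S n)).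
Proof.
  intros Hx. unfold gauss_seq, Rpower, dl.
  replace (rising_prod x (S n)) with (rising_prod x n * (x + INR (S n))) by reflexivity.
  replace (fact (S n)) with (S n * fact n)%nat by reflexivity.
  rewrite mult_INR.
  replace (x * ln (INR (S n))) with (x * ln (INR n) + x * (ln (INR (S n)) - ln (INR n))) by ring.
  rewrite exp_plus.
  pose proof (rising_pos x n Hx). pose proof (pos_INR (S n)).
  field. lra.
Qed.

Definition uG x n := gauss_seq x (S n).

Lemma uG_grow x : 0 < x -> Un_growing (uG x).
Proof.
  intros Hx n. unfold uG. rewrite (gauss_S x (S n) Hx).
  pose proof (gauss_pos x (S n) Hx).
  pose proof (dl_bounds (S n) ltac:(lia)) as [Hl _].
  assert (HS : 0 < INR (S (S n))) by (apply lt_0_INR; lia).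
  pose proof (exp_ineq1_le (x * dl (S n))).
  assert (x * / INR (S (S n)) <= x * dl (S n)) by (apply Rmult_le_compat_l; lra).
  assert (INR (S (S n)) * exp (x * dl (S n)) >= x + INR (S (S n))).
  { assert (INR (S (S n)) * (1 + x * / INR (S (S n))) = x + INR (S (S n))) by (field; lra).
    assert (INR (S (S n)) * (1 + x * / INR (S (S n))) <= INR (S (S n)) * exp (x * dl (S n)))
      by (apply Rmult_le_compat_l; lra). lra. }
  apply Rmult_le_reg_r with (x + INR (S (S n))). lra.
  unfold Rdiv. rewrite Rmult_assoc. rewrite Rmult_assoc. rewrite Rinv_l by lra.
  rewrite Rmult_1_r, Rmult_assoc.
  apply Rmult_le_compat_l; lra.
Qed.

Lemma uG_bound x n : 0 < x -> uG x n <= uG x 0 * exp (x * (1 + x) * (1 - / INR (S n))).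
Proof.
  intros Hx. induction n.
  - replace (1 - / INR 1) with 0 by (simpl; field). rewrite Rmult_0_r, exp_0. lra.
  - unfold uG in *. rewrite (gauss_S x (S n) Hx).
    set (m := INR (S n)).
    assert (Hm : 0 < m) by (apply lt_0_INR; lia).
    assert (HSm : INR (S (S n)) = m + 1) by (unfold m; rewrite (S_INR (S n)); ring).
    rewrite HSm in *.
    pose proof (dl_bounds (S n) ltac:(lia)) as [_ Hu]. fold m in Hu.
    pose proof (gauss_pos x (S n) Hx).
    set (y := x * (x - m) / (m * (m + 1))).
    assert (Hy : (m + 1) / (x + (m + 1)) <= 1 + y).
    { assert (1 + y - (m + 1) / (x + (m + 1)) = x * x * (x + 1) / (m * (m + 1) * (x + (m + 1)))).
      { unfold y. field. lra. }
      assert (0 <= x * x * (x + 1) / (m * (m + 1) * (x + (m + 1)))).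
      { apply Rmult_le_pos. apply Rmult_le_pos. nra. lra.
        left. apply Rinv_0_lt_compat. apply Rmult_lt_0_compat. nra. lra. }
      lra. }
    pose proof (exp_ineq1_le y).
    assert (Hr : (m + 1) * exp (x * dl (S n)) / (x + (m + 1)) <= exp (x * (1 + x) * (/ m - / (m + 1)))).
    { replace (x * (1 + x) * (/ m - / (m + 1))) with (x / m + y) by (unfold y; field; lra).
      rewrite exp_plus.
      assert (exp (x * dl (S n)) <= exp (x / m)).
      { destruct (Req_dec (x * dl (S n)) (x/m)) as [E|E]. rewrite E; lra.
        left. apply exp_increasing. unfold Rdiv.
        assert (x * dl (S n) <= x * / m) by (apply Rmult_le_compat_l; lra). lra. }
      replace ((m + 1) * exp (x * dl (S n)) / (x + (m + 1))) with
        (exp (x * dl (S n)) * ((m + 1) / (x + (m + 1)))) by (field; lra).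
      pose proof (exp_pos (x * dl (S n))). pose proof (exp_pos (x/m)).
      assert (0 <= (m + 1) / (x + (m + 1))) by (left; apply Rdiv_lt_0_compat; lra).
      apply Rmult_le_compat; lra. }
    replace (gauss_seq x (S n) * (m + 1) * exp (x * dl (S n)) / (x + (m + 1))) with
      (gauss_seq x (S n) * ((m + 1) * exp (x * dl (S n)) / (x + (m + 1)))) by (field; lra).
    apply Rle_trans with (gauss_seq x (S n) * exp (x * (1 + x) * (/ m - / (m + 1)))).
    apply Rmult_le_compat_l; lra.
    rewrite <- HSm.
    replace (x * (1 + x) * (1 - / INR (S (S n)))) with
      (x * (1 + x) * (1 - / m) + x * (1 + x) * (/ m - / INR (S (S n)))) by ring.
    rewrite exp_plus. rewrite HSm. rewrite <- Rmult_assoc.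
    apply Rmult_le_compat_r. left; apply exp_pos. exact IHn.
Qed.

Lemma gamma_exists x : 0 < x -> exists g, Un_cv (gauss_seq x) g /\ 0 < g.
Proof.
  intros Hx.
  assert (Hub : has_ub (uG x)).
  { exists (uG x 0 * exp (x * (1 + x))). intros y [n ->].
    apply Rle_trans with (1 := uG_bound x n Hx).
    apply Rmult_le_compat_l. left; apply gauss_pos; auto.
    destruct (Req_dec (x * (1 + x) * (1 - / INR (S n))) (x * (1 + x))) as [E|E].
    rewrite E; lra. left. apply exp_increasing.
    assert (0 < / INR (S n)) by (apply Rinv_0_lt_compat, lt_0_INR; lia).
    assert (0 < x * (1 + x)) by nra. nra. }
  destruct (growing_cv (uG x) (uG_grow x Hx) Hub) as [l Hl].
  exists l. split.
  - apply is_lim_seq_Reals. apply is_lim_seq_incr_1. apply is_lim_seq_Reals. exact Hl.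
  - apply Rlt_le_trans with (uG x 0). apply gauss_pos; auto.
    apply growing_ineq; auto. apply uG_grow; auto.
Qed.

Lemma Gamma_spec x : 0 < x -> Un_cv (gauss_seq x) (Gamma x) /\ 0 < Gamma x.
Proof.
  intros Hx. destruct (gamma_exists x Hx) as [g [Hg Hp]].
  assert (H : Un_cv (gauss_seq x) (Gamma x)).
  { unfold Gamma. apply epsilon_spec. exists g; auto. }
  split; auto. rewrite (UL_sequence _ _ _ H Hg). auto.
Qed.


Lemma rising_shift x n : rising_prod (x + 1) n * x = rising_prod x n * (x + 1 + INR n).
Proof.
  induction n; cbn [rising_prod].
  - simpl. ring.
  - transitivity (rising_prod (x + 1) n * x * (x + 1 + INR (S n))).
    ring. rewrite IHn, S_INR. ring.
Qed.

Lemma lim_frac c : is_lim_seq (fun n => INR (S n) / (c + INR (S n))) 1.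
Proof.
  apply is_lim_seq_ext with (u := fun n => / (1 + c * / INR (S n))).
  - intros n. assert (0 < INR (S n)) by (apply lt_0_INR; lia).
    assert (c + INR (S n) <> 0 \/ c + INR (S n) = 0) by (destruct (Req_dec (c + INR (S n)) 0); auto).
    destruct H0.
    + field. split; auto. lra.
    + replace (1 + c * / INR (S n)) with 0.
      rewrite H0. unfold Rdiv. rewrite !Rinv_0. ring.
      replace c with (- INR (S n)) by lra. field. lra.
  - replace (Finite 1) with (Rbar_inv (1 + c * 0)) by (simpl; f_equal; field).
    apply is_lim_seq_inv. apply is_lim_seq_plus'. apply is_lim_seq_const.
    pose proof (is_lim_seq_scal_l _ c 0 lim_inv_Sn) as H. simpl in H. exact H.
    simpl. intro H. injection H. lra.
Qed.

Lemma Gamma_succ x : 0 < x -> Gamma (x + 1) = x * Gamma x.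
Proof.
  intros Hx. destruct (Gamma_spec x Hx) as [H1 _].
  destruct (Gamma_spec (x + 1) ltac:(lra)) as [H2 _].
  apply is_lim_seq_Reals in H1, H2.
  apply is_lim_seq_incr_1 in H1, H2.
  assert (H3 : is_lim_seq (fun n => gauss_seq x (S n) * (x * (INR (S n) / (x + 1 + INR (S n))))) (Gamma x * (x * 1))).
  { apply is_lim_seq_mult'; auto. apply is_lim_seq_mult'. apply is_lim_seq_const.
    apply lim_frac. }
  assert (E : forall n, gauss_seq (x + 1) (S n) = gauss_seq x (S n) * (x * (INR (S n) / (x + 1 + INR (S n))))).
  { intros n. unfold gauss_seq, Rpower.
    assert (0 < INR (S n)) by (apply lt_0_INR; lia).
    replace ((x + 1) * ln (INR (S n))) with (x * ln (INR (S n)) + ln (INR (S n))) by ring.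
    rewrite exp_plus, exp_ln by lra.
    pose proof (rising_shift x (S n)).
    pose proof (rising_pos x (S n) Hx). pose proof (rising_pos (x+1) (S n) ltac:(lra)).
    assert (R : rising_prod (x + 1) (S n) = rising_prod x (S n) * (x + 1 + INR (S n)) / x)
      by (rewrite <- H0; field; lra).
    rewrite R. field. lra. }
  apply is_lim_seq_ext with (v := fun n => gauss_seq (x + 1) (S n)) in H3.
  2: { intros n; rewrite E; reflexivity. }
  pose proof (is_lim_seq_unique _ _ H2) as U1. pose proof (is_lim_seq_unique _ _ H3) as U2.
  rewrite U1 in U2. injection U2. intros ->. ring.
Qed.

Lemma decay (g : nat -> R) lam M : 0 < lam -> (1 <= M)%nat ->
  (forall m, (M <= m)%nat -> 0 <= g m) ->
  (forall m, (M <= m)%nat -> g (S m) <= (1 - lam / INR m) * g m) ->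
  forall eps, 0 < eps -> exists N, forall m, (N <= m)%nat -> g m < eps.
Proof.
  intros Hl HM Hpos Hrec.
  assert (HMp : 0 < INR M) by (apply lt_0_INR; lia).
  assert (Cl : forall k, g (M + k)%nat <= g M * exp (lam * (ln (INR M) - ln (INR (M + k))))).
  { induction k.
    - rewrite Nat.add_0_r. replace (lam * (ln (INR M) - ln (INR M))) with 0 by ring.
      rewrite exp_0; lra.
    - set (m := (M + k)%nat) in *. replace (M + S k)%nat with (S m) by (unfold m; lia).
      assert (Hm : 0 < INR m) by (apply lt_0_INR; unfold m; lia).
      pose proof (Hrec m ltac:(unfold m; lia)). pose proof (Hpos m ltac:(unfold m; lia)).
      pose proof (exp_ineq1_le (- (lam / INR m))).
      assert ((1 - lam / INR m) * g m <= exp (- (lam / INR m)) * g m)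
        by (apply Rmult_le_compat_r; lra).
      pose proof (dl_bounds m ltac:(unfold m; lia)) as [_ Hd]. unfold dl in Hd.
      apply Rle_trans with (exp (- (lam / INR m)) * g m). lra.
      apply Rle_trans with (exp (- (lam / INR m)) * (g M * exp (lam * (ln (INR M) - ln (INR m))))).
      apply Rmult_le_compat_l. left; apply exp_pos. exact IHk.
      replace (exp (- (lam / INR m)) * (g M * exp (lam * (ln (INR M) - ln (INR m))))) with
        (g M * exp (- (lam / INR m) + lam * (ln (INR M) - ln (INR m)))) by (rewrite exp_plus; ring).
      apply Rmult_le_compat_l. apply Hpos; lia.
      destruct (Req_dec (- (lam / INR m) + lam * (ln (INR M) - ln (INR m))) (lam * (ln (INR M) - ln (INR (S m))))) as [E|E].
      rewrite E; lra. left. apply exp_increasing.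
      assert (lam * (ln (INR (S m)) - ln (INR m)) <= lam * / INR m) by (apply Rmult_le_compat_l; lra).
      unfold Rdiv in *. lra. }
  intros eps Heps.
  set (gM := g M). assert (HgM : 0 <= gM) by (apply Hpos; lia).
  set (T := ln (INR M) + (ln (gM + 1) - ln eps) / lam).
  destruct (archimed (exp T)) as [Ha _].
  assert (Hup : (0 <= up (exp T))%Z).
  { apply le_IZR. pose proof (exp_pos T). lra. }
  exists (M + Z.to_nat (up (exp T)))%nat.
  intros m Hm. replace m with (M + (m - M))%nat by lia.
  apply Rle_lt_trans with (1 := Cl (m - M)%nat).
  replace (M + (m - M))%nat with m by lia.
  assert (Hmg : exp T < INR m).
  { apply Rlt_le_trans with (IZR (up (exp T))). exact Ha.
    rewrite <- (Z2Nat.id (up (exp T))) by exact Hup. rewrite <- INR_IZR_INZ.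
    apply le_INR. lia. }
  assert (HlnT : T < ln (INR m)).
  { rewrite <- (ln_exp T). apply ln_increasing. apply exp_pos. exact Hmg. }
  assert (Hexp : lam * (ln (INR M) - ln (INR m)) < ln (eps / (gM + 1))).
  { rewrite ln_div by lra. unfold T in HlnT.
    assert (ln (INR M) - ln (INR m) < - ((ln (gM + 1) - ln eps) / lam)) by lra.
    apply Rmult_lt_compat_l with (r := lam) in H; auto.
    replace (lam * - ((ln (gM + 1) - ln eps) / lam)) with (ln eps - ln (gM + 1)) in H by (field; lra).
    lra. }
  apply exp_increasing in Hexp. rewrite exp_ln in Hexp.
  2: apply Rdiv_lt_0_compat; lra.
  apply Rle_lt_trans with (gM * (eps / (gM + 1))).
  apply Rmult_le_compat_l; lra.
  apply Rmult_lt_reg_r with (gM + 1). lra.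
  replace (gM * (eps / (gM + 1)) * (gM + 1)) with (gM * eps) by (field; lra). nra.
Qed.

Lemma ev_lim (u : nat -> R) (l e : R) : is_lim_seq u l -> 0 < e ->
  exists N, forall n, (N <= n)%nat -> Rabs (u n - l) < e.
Proof.
  intros H He. apply is_lim_seq_spec in H. destruct (H (mkposreal e He)) as [N HN].
  exists N. exact HN.
Qed.

Lemma contr (z rho h : nat -> R) (lam mu : R) M0 : 0 < lam ->
  (forall m, (M0 <= m)%nat -> z (S m) = rho m * z m + h m) ->
  is_lim_seq (fun m => INR m * (1 - rho m)) lam ->
  is_lim_seq (fun m => INR m * h m) mu ->
  is_lim_seq z (mu / lam).
Proof.
  intros Hl Hrec Hc Hh.
  set (L := mu / lam).
  apply is_lim_seq_spec. intros [eps Heps]. simpl.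
  set (del := eps * lam / (4 * (1 + Rabs L))).
  assert (Hdel : 0 < del).
  { unfold del. apply Rdiv_lt_0_compat. nra. pose proof (Rabs_pos L). lra. }
  destruct (ev_lim _ _ (Rmin del (lam / 2)) Hc ltac:(apply Rmin_glb_lt; lra)) as [N1 HN1].
  destruct (ev_lim _ _ del Hh Hdel) as [N2 HN2].
  destruct (archimed (2 * lam)) as [Ha _].
  assert (Hup : (0 <= up (2 * lam))%Z) by (apply le_IZR; lra).
  set (N3 := Z.to_nat (up (2 * lam))).
  assert (HN3 : 2 * lam < INR N3).
  { unfold N3. rewrite INR_IZR_INZ, Z2Nat.id by exact Hup. exact Ha. }
  set (M := (M0 + N1 + N2 + N3 + 1)%nat).
  set (g := fun m => Rmax (Rabs (z m - L) - eps / 2) 0).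
  assert (Key : forall m, (M <= m)%nat -> g (S m) <= (1 - (lam / 2) / INR m) * g m).
  { intros m Hm.
    assert (Hmp : 0 < INR m) by (apply lt_0_INR; unfold M in Hm; lia).
    assert (HmN3 : INR N3 <= INR m) by (apply le_INR; unfold M in Hm; lia).
    specialize (HN1 m ltac:(unfold M in Hm; lia)).
    specialize (HN2 m ltac:(unfold M in Hm; lia)).
    pose proof (Rmin_l del (lam/2)). pose proof (Rmin_r del (lam/2)).
    set (c := 1 - rho m) in *.
    assert (Hc1 : lam / 2 <= INR m * c /\ INR m * c <= 3 * lam / 2).
    { apply Rabs_def2 in HN1. lra. }
    assert (Hcpos : lam / 2 / INR m <= c).
    { apply Rmult_le_reg_l with (INR m); auto. field_simplify; lra. }
    assert (Hcle : c <= 1).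
    { apply Rmult_le_reg_l with (INR m); auto. lra. }
    assert (Hhc : Rabs (h m - c * L) <= eps / 2 * c).
    { assert (Rabs (INR m * (h m - c * L)) <= eps * lam / 4).
      { replace (INR m * (h m - c * L)) with ((INR m * h m - mu) - L * (INR m * c - lam))
          by (unfold L; field; lra).
        eapply Rle_trans. apply Rabs_triang. rewrite Rabs_Ropp, Rabs_mult.
        assert (Rabs (INR m * c - lam) <= del) by lra.
        assert (Rabs L * Rabs (INR m * c - lam) <= Rabs L * del)
          by (apply Rmult_le_compat_l; auto; apply Rabs_pos).
        assert (del + Rabs L * del = eps * lam / 4).
        { unfold del. field. pose proof (Rabs_pos L). lra. }
        lra. }
      rewrite Rabs_mult, Rabs_pos_eq in H1 by lra.
      assert (Rabs (h m - c * L) <= eps * lam / 4 / INR m).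
      { apply Rmult_le_reg_l with (INR m); auto. field_simplify; lra. }
      assert (eps * lam / 4 / INR m = eps / 2 * (lam / 2 / INR m)) by (field; lra).
      assert (eps / 2 * (lam / 2 / INR m) <= eps / 2 * c) by (apply Rmult_le_compat_l; lra).
      lra. }
    assert (Hz : z (S m) - L = rho m * (z m - L) + (h m - c * L)).
    { rewrite Hrec by (unfold M in Hm; lia). unfold c. ring. }
    assert (Hd : Rabs (z (S m) - L) <= (1 - c) * Rabs (z m - L) + eps / 2 * c).
    { rewrite Hz. eapply Rle_trans. apply Rabs_triang. rewrite Rabs_mult.
      rewrite (Rabs_pos_eq (rho m)) by (unfold c in *; lra).
      replace (rho m) with (1 - c) by (unfold c; ring). lra. }
    unfold g. apply Rmax_lub.
    - assert (Rabs (z m - L) - eps / 2 <= Rmax (Rabs (z m - L) - eps / 2) 0) by apply Rmax_l.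
      assert ((1 - c) * (Rabs (z m - L) - eps / 2) <= (1 - c) * Rmax (Rabs (z m - L) - eps / 2) 0)
        by (apply Rmult_le_compat_l; lra).
      assert (0 <= Rmax (Rabs (z m - L) - eps / 2) 0) by apply Rmax_r.
      assert ((1 - c) * Rmax (Rabs (z m - L) - eps / 2) 0 <= (1 - lam / 2 / INR m) * Rmax (Rabs (z m - L) - eps / 2) 0)
        by (apply Rmult_le_compat_r; lra).
      lra.
    - apply Rmult_le_pos. 2: apply Rmax_r.
      assert (lam / 2 / INR m <= 1).
      { apply Rmult_le_reg_l with (INR m); auto. field_simplify; lra. }
      lra. }
  destruct (decay g (lam / 2) M ltac:(lra) ltac:(unfold M; lia)
              ltac:(intros; apply Rmax_r) Key (eps / 2) ltac:(lra)) as [N HN].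
  exists N. intros n Hn. specialize (HN n Hn). unfold g in HN.
  pose proof (Rmax_l (Rabs (z n - L) - eps / 2) 0). lra.
Qed.

Lemma lim_ratio k1 k2 : 0 < k2 -> is_lim_seq (fun m => (INR m + k1) / (INR m + k2)) 1.
Proof.
  intros Hk.
  assert (Hi : is_lim_seq (fun m => / (INR m + k2)) 0).
  { apply is_lim_seq_le_le_loc with (u := fun _ => 0) (w := fun m => / INR m).
    - exists 1%nat. intros n Hn. assert (0 < INR n) by (apply lt_0_INR; lia). split.
      left; apply Rinv_0_lt_compat; lra.
      apply Rinv_le_contravar; lra.
    - apply is_lim_seq_const.
    - apply lim_inv_n. }
  apply is_lim_seq_ext with (u := fun m => 1 + (k1 - k2) * / (INR m + k2)).
  - intros m. pose proof (pos_INR m). field. lra.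
  - replace (Finite 1) with (Finite (1 + (k1 - k2) * 0)) by (f_equal; ring).
    apply is_lim_seq_plus'. apply is_lim_seq_const.
    apply is_lim_seq_mult'. apply is_lim_seq_const. exact Hi.
Qed.

Definition Cf (a1 a2 b1 b2 B s : R) (w1 : nat) : R :=
  s / a2 * (1 / INR (fact w1))
    * (Gamma (INR w1 + b1 / a1) / Gamma (b1 / a1))
    * (Gamma (1 + (B + 1) / a2) / Gamma (1 + b2 / a2)).

Lemma Cf_pos a1 a2 b1 b2 B s w1 : 0 < a1 -> 0 < a2 -> 0 < b1 -> 0 < b2 -> B = b1 + b2 -> 0 < s ->
  0 < Cf a1 a2 b1 b2 B s w1.
Proof.
  intros H1 H2 H3 H4 HB Hs. unfold Cf.
  assert (0 < b1 / a1) by (apply Rdiv_lt_0_compat; lra).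
  assert (0 < b2 / a2) by (apply Rdiv_lt_0_compat; lra).
  assert (0 < (B + 1) / a2) by (apply Rdiv_lt_0_compat; lra).
  pose proof (pos_INR w1).
  pose proof (proj2 (Gamma_spec (INR w1 + b1 / a1) ltac:(lra))).
  pose proof (proj2 (Gamma_spec (b1 / a1) ltac:(lra))).
  pose proof (proj2 (Gamma_spec (1 + (B + 1) / a2) ltac:(lra))).
  pose proof (proj2 (Gamma_spec (1 + b2 / a2) ltac:(lra))).
  pose proof (fact_pos w1).
  apply Rmult_lt_0_compat; [apply Rmult_lt_0_compat; [apply Rmult_lt_0_compat|]|];
    apply Rdiv_lt_0_compat; lra.
Qed.

Lemma Cf_S a1 a2 b1 b2 B s i : 0 < a1 -> 0 < a2 -> 0 < b1 -> 0 < b2 ->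
  Cf a1 a2 b1 b2 B s (S i) = Cf a1 a2 b1 b2 B s i * (a1 * INR i + b1) / (a1 * INR (S i)).
Proof.
  intros H1 H2 H3 H3'. unfold Cf.
  assert (0 < b2 / a2) by (apply Rdiv_lt_0_compat; lra).
  pose proof (proj2 (Gamma_spec (1 + b2 / a2) ltac:(lra))).
  assert (0 < b1 / a1) by (apply Rdiv_lt_0_compat; lra).
  pose proof (pos_INR i).
  replace (INR (S i) + b1 / a1) with ((INR i + b1 / a1) + 1) by (rewrite S_INR; ring).
  rewrite Gamma_succ by lra.
  replace (fact (S i)) with (S i * fact i)%nat by reflexivity. rewrite mult_INR.
  pose proof (proj2 (Gamma_spec (b1 / a1) ltac:(lra))).
  pose proof (fact_pos i). rewrite S_INR.
  field. repeat split; lra.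
Qed.

Lemma final_conv (u : nat -> R) (C e : R) : C <> 0 ->
  is_lim_seq (fun w => u w * exp (e * ln (INR w))) C ->
  Un_cv (fun w => u w / (C * Rpower (INR w) (- e))) 1.
Proof.
  intros HC H. apply is_lim_seq_Reals.
  apply is_lim_seq_ext with (u := fun w => u w * exp (e * ln (INR w)) / C).
  - intros w. unfold Rpower. replace (- e * ln (INR w)) with (- (e * ln (INR w))) by ring.
    rewrite exp_Ropp. pose proof (exp_pos (e * ln (INR w))). field. split; lra.
  - replace (Finite 1) with (Finite (C / C)) by (f_equal; field; auto).
    apply is_lim_seq_div'; auto. apply is_lim_seq_const.
Qed.

Lemma base_case a1 a2 b1 b2 B s (X : nat -> nat -> R) :
  0 < a1 -> 0 < a2 -> 0 < b1 -> 0 < b2 -> B = b1 + b2 ->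
  X 0%nat 1%nat = s / (a2 + B + 1) ->
  (forall m, X 0%nat (S (S m)) = (a2 * INR (S m) + b2) * X 0%nat (S m) / (a2 * INR (S (S m)) + B + 1)) ->
  is_lim_seq (fun w => X 0%nat w * exp ((1 + (b1 + 1) / a2) * ln (INR w))) (Cf a1 a2 b1 b2 B s 0).
Proof.
  intros H1 H2 H3 H4 HB H01 H0S.
  set (b := b2 / a2). set (c := (B + 1) / a2). set (e := 1 + (b1 + 1) / a2).
  assert (Hb : 0 < b) by (apply Rdiv_lt_0_compat; lra).
  assert (Hc : 0 < c) by (apply Rdiv_lt_0_compat; lra).
  assert (He : e = 1 + c - b) by (unfold e, c, b; rewrite HB; field; lra).
  assert (Closed : forall n, X 0%nat (S n) = s / (a2 * b) * (rising_prod b n / rising_prod (1 + c) n)).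
  { induction n.
    - rewrite H01. cbn [rising_prod]. unfold c, b. field. repeat split; try lra.
    - rewrite H0S, IHn.
      replace (rising_prod b (S n)) with (rising_prod b n * (b + INR (S n))) by reflexivity.
      replace (rising_prod (1 + c) (S n)) with (rising_prod (1 + c) n * (1 + c + INR (S n))) by reflexivity.
      rewrite (S_INR (S n)).
      pose proof (rising_pos b n Hb). pose proof (rising_pos (1 + c) n ltac:(lra)).
      pose proof (pos_INR (S n)).
      assert (Eb : b2 = a2 * b) by (unfold b; field; lra).
      assert (Ec : B = a2 * c - 1) by (unfold c; field; lra).
      rewrite Eb, Ec.
      assert (0 < a2 * (INR (S n) + 1) + (a2 * c - 1) + 1).
      { replace (a2 * (INR (S n) + 1) + (a2 * c - 1) + 1) with (a2 * (INR (S n) + 1 + c)) by ring.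
        apply Rmult_lt_0_compat; lra. }
      field. repeat split; try lra. }
  assert (Zf : forall n, X 0%nat (S n) * exp (e * ln (INR (S n))) =
             s / (a2 * b) * (gauss_seq (1 + c) n / gauss_seq b n) * exp (e * dl n)).
  { intros n. rewrite Closed. unfold gauss_seq, Rpower, dl.
    replace (e * ln (INR (S n))) with (e * (ln (INR (S n)) - ln (INR n)) + e * ln (INR n)) by ring.
    replace ((1 + c) * ln (INR n)) with (b * ln (INR n) + e * ln (INR n)) by (rewrite He; ring).
    rewrite !exp_plus.
    pose proof (rising_pos b n Hb). pose proof (rising_pos (1 + c) n ltac:(lra)).
    pose proof (fact_pos n). pose proof (exp_pos (b * ln (INR n))). pose proof (exp_pos (e * ln (INR n))).
    pose proof (exp_pos (e * (ln (INR (S n)) - ln (INR n)))).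
    field. repeat split; lra. }
  destruct (Gamma_spec b Hb) as [Gb Gbp]. destruct (Gamma_spec (1 + c) ltac:(lra)) as [Gc Gcp].
  apply is_lim_seq_Reals in Gb, Gc.
  apply is_lim_seq_incr_1.
  apply is_lim_seq_ext with (u := fun n => s / (a2 * b) * (gauss_seq (1 + c) n / gauss_seq b n) * exp (e * dl n)).
  { intros n. rewrite Zf. reflexivity. }
  replace (Cf a1 a2 b1 b2 B s 0) with (s / (a2 * b) * (Gamma (1 + c) / Gamma b) * 1).
  2: { unfold Cf. simpl INR. rewrite Rplus_0_l.
       assert (0 < b1 / a1) by (apply Rdiv_lt_0_compat; lra).
       pose proof (proj2 (Gamma_spec (b1 / a1) H)).
       fold c b. rewrite (Rplus_comm 1 b), Gamma_succ by lra. simpl fact.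
       field. repeat split; lra. }
  apply is_lim_seq_mult'. apply is_lim_seq_mult'. apply is_lim_seq_const.
  apply is_lim_seq_div'; auto. lra.
  apply exp_dl_lim.
Qed.

Lemma step_case a1 a2 b1 b2 B (X : nat -> nat -> R) (i : nat) (L : R) :
  0 < a1 -> 0 < a2 -> 0 < b1 -> 0 < b2 -> B = b1 + b2 ->
  (forall m, X (S i) (S m) = ((a1 * INR i + b1) * X i (S m) + (a2 * INR m + b2) * X (S i) m)
                             / (a1 * INR (S i) + a2 * INR (S m) + B + 1)) ->
  is_lim_seq (fun w => X i w * exp ((1 + (b1 + 1) / a2) * ln (INR w))) L ->
  is_lim_seq (fun w => X (S i) w * exp ((1 + (b1 + 1) / a2) * ln (INR w)))
     (L * (a1 * INR i + b1) / (a1 * INR (S i))).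
Proof.
  intros H1 H2 H3 H4 HB HSS IH.
  set (e := 1 + (b1 + 1) / a2).
  assert (He : 0 < e) by (unfold e; assert (0 < (b1 + 1) / a2) by (apply Rdiv_lt_0_compat; lra); lra).
  set (D := a1 * INR (S i) + B + 1).
  assert (HD : 0 < D) by (unfold D; pose proof (pos_INR (S i)); nra).
  set (G := a1 * INR i + b1).
  assert (HG : 0 < G) by (unfold G; pose proof (pos_INR i); nra).
  set (rho := fun m => (INR m + b2 / a2) / (INR m + (D + a2) / a2) * exp (e * dl m)).
  set (h := fun m => G * (X i (S m) * exp (e * ln (INR (S m)))) / a2 / (INR m + (D + a2) / a2)).
  assert (Hk : 0 < (D + a2) / a2) by (apply Rdiv_lt_0_compat; lra).
  replace (L * G / (a1 * INR (S i))) with ((G * L / a2) / (a1 * INR (S i) / a2)).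
  2: { assert (0 < a1 * INR (S i)) by (apply Rmult_lt_0_compat; [lra| apply lt_0_INR; lia]).
       assert (0 < INR (S i)) by (apply lt_0_INR; lia).
       field. repeat split; lra. }
  apply contr with (rho := rho) (h := h) (M0 := 0%nat).
  - apply Rdiv_lt_0_compat; [|lra]. apply Rmult_lt_0_compat; [lra| apply lt_0_INR; lia].
  - intros m _. rewrite HSS. unfold rho, h, dl.
    replace (e * ln (INR (S m))) with (e * (ln (INR (S m)) - ln (INR m)) + e * ln (INR m)) by ring.
    rewrite exp_plus. pose proof (pos_INR m).
    replace (a1 * INR (S i) + a2 * INR (S m) + B + 1) with (a2 * (INR m + (D + a2) / a2))
      by (unfold D; rewrite (S_INR m); field; lra).
    assert (0 < INR m + (D + a2) / a2) by lra.
    fold G. field. split; [lra|]. pose proof (Rmult_le_pos _ _ H (Rlt_le _ _ H2)). lra.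
  -
    apply is_lim_seq_ext with
      (u := fun m => (D + a2 - b2) / a2 * ((INR m + 0) / (INR m + (D + a2) / a2))
                     - (INR m + b2 / a2) / (INR m + (D + a2) / a2) * (INR m * (exp (e * dl m) - 1))).
    { intros m. unfold rho. pose proof (pos_INR m) as Hm.
      pose proof (Rmult_le_pos _ _ Hm (Rlt_le _ _ H2)). field. split; lra. }
    replace (Finite (a1 * INR (S i) / a2)) with (Finite ((D + a2 - b2) / a2 * 1 - 1 * e)).
    2: { f_equal. unfold D, e. rewrite HB. field. lra. }
    apply is_lim_seq_minus'. apply is_lim_seq_mult'. apply is_lim_seq_const.
    apply lim_ratio; lra.
    apply is_lim_seq_mult'. apply lim_ratio; lra. apply mdl_lim; lra.
  - apply is_lim_seq_ext with
      (u := fun m => G * (X i (S m) * exp (e * ln (INR (S m)))) / a2 * ((INR m + 0) / (INR m + (D + a2) / a2))).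
    { intros m. unfold h. pose proof (pos_INR m) as Hm.
      pose proof (Rmult_le_pos _ _ Hm (Rlt_le _ _ H2)). field. split; lra. }
    replace (Finite (G * L / a2)) with (Finite (G * L / a2 * 1)) by (f_equal; ring).
    apply is_lim_seq_mult'. 2: apply lim_ratio; lra.
    unfold Rdiv. apply is_lim_seq_mult'. 2: apply is_lim_seq_const.
    apply is_lim_seq_mult'. apply is_lim_seq_const.
    apply (is_lim_seq_incr_1 (fun w => X i w * exp (e * ln (INR w)))). exact IH.
Qed.

Lemma abs_thm a1 a2 b1 b2 B s (X : nat -> nat -> R) :
  0 < a1 -> 0 < a2 -> 0 < b1 -> 0 < b2 -> B = b1 + b2 -> 0 < s ->
  X 0%nat 1%nat = s / (a2 + B + 1) ->
  (forall m, X 0%nat (S (S m)) = (a2 * INR (S m) + b2) * X 0%nat (S m) / (a2 * INR (S (S m)) + B + 1)) ->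
  (forall i m, X (S i) (S m) = ((a1 * INR i + b1) * X i (S m) + (a2 * INR m + b2) * X (S i) m)
                             / (a1 * INR (S i) + a2 * INR (S m) + B + 1)) ->
  forall w1, Un_cv (fun w2 => X w1 w2 /
     (Cf a1 a2 b1 b2 B s w1 * Rpower (INR w2) (- (1 + (b1 + 1) / a2)))) 1.
Proof.
  intros H1 H2 H3 H4 HB Hs H01 H0S HSS w1.
  apply final_conv.
  - apply Rgt_not_eq. apply Cf_pos; auto.
  - induction w1.
    + apply base_case; auto.
    + rewrite (Cf_S a1 a2 b1 b2 B s w1) by auto. apply step_case with (b2 := b2) (B := B); auto.
Qed.

Theorem theorem3p4 (N : nat) (p q r : R) :
  (3 <= N)%nat -> 0 < p < 1 -> 0 < q < 1 -> 0 < r < 1 ->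
  (forall w1 : nat,
     Un_cv (fun w2 : nat =>
              xw N p q r w1 w2 /
              (Cconst N p q r w1 *
               Rpower (INR w2) (- (1 + (beta1 p q + 1) / alpha2 N p q r)))) 1)
  /\
  (forall w2 : nat,
     Un_cv (fun w1 : nat =>
              xw N p q r w1 w2 /
              (Cconst' N p q r w2 *
               Rpower (INR w1) (- (1 + (beta2 N p q r + 1) / alpha1 p q r)))) 1).
Proof.
  intros HN Hp Hq Hr.
  assert (HN3 : 3 <= INR N) by (replace 3 with (INR 3) by (simpl; ring); apply le_INR; exact HN).
  assert (Ha1 : 0 < alpha1 p q r) by (unfold alpha1; nra).
  assert (Ha2 : 0 < alpha2 N p q r).
  { unfold alpha2. assert (0 < p * r * (INR N - 2) / (INR N - 1)).
    { apply Rdiv_lt_0_compat; [|lra]. apply Rmult_lt_0_compat; [nra|lra]. }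
    nra. }
  assert (Hb1 : 0 < beta1 p q) by (unfold beta1; apply Rdiv_lt_0_compat; nra).
  assert (Hb2 : 0 < beta2 N p q r).
  { unfold beta2. apply Rmult_lt_0_compat. lra. fold (beta1 p q). lra. }
  split.
  - intros w1.
    exact (abs_thm (alpha1 p q r) (alpha2 N p q r) (beta1 p q) (beta2 N p q r) (beta N p q r) r
             (xw N p q r) Ha1 Ha2 Hb1 Hb2 eq_refl ltac:(lra) eq_refl (fun m => eq_refl)
             (fun i m => eq_refl) w1).
  - intros w2.
    apply (abs_thm (alpha2 N p q r) (alpha1 p q r) (beta2 N p q r) (beta1 p q) (beta N p q r) (1 - r)
             (fun i j => xw N p q r j i) Ha2 Ha1 Hb2 Hb1 ltac:(unfold beta; ring) ltac:(lra)
             eq_refl (fun m => eq_refl)).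
    intros i m.
    change (xw N p q r (S m) (S i)) with
      (((alpha1 p q r * INR m + beta1 p q) * xw N p q r m (S i)
        + (alpha2 N p q r * INR i + beta2 N p q r) * xw N p q r (S m) i)
       / (alpha1 p q r * INR (S m) + alpha2 N p q r * INR (S i) + beta N p q r + 1)).
    unfold Rdiv. f_equal. ring. f_equal. ring.
Qed.
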